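(* Let $R$ be a Noetherian ring, let $N\subsetneq M$ be finitely generated $R$-modules, and let $X=\{P_1,\dots,P_r\}\subseteq\operatorname{Ass}(M/N)=\{P_1,\dots,P_r,P_{r+1},\dots,P_s\}$ (the $P_i$ distinct). Then the following are equivalent: (1) the primary decompositions of $N$ in $M$ are independent over $X$; (2) for any $Q_i,Q_i'\in\Lambda_{P_i}(N\subsetneq M)$, $i=1,\dots,r$, one has $Q_1\cap\cdots\cap Q_r=Q_1'\cap\cdots\cap Q_r'$.
   Context: A submodule $Q\subseteq M$ is $P$-primary if $\operatorname{Ass}(M/Q)=\{P\}$. A primary decomposition of $N$ in $M$ means an irredundant and minimal primary decomposition $N=Q_1\cap\cdots\cap Q_s$ with $Q_i$ being $P_i$-primary, the $P_i$ distinct; $Q_i$ is then called a $P_i$-primary component of $N$ in $M$. For $P\in\operatorname{Ass}(M/N)$, $\Lambda_P(N\subsetneq M)$ is the set of all $P$-primary components of $N$ in $M$ (over all such primary decompositions). The primary decompositions of $N$ in $M$ are called independent over $X=\{P_1,\dots,P_r\}\subseteq \operatorname{Ass}(M/N)$ if for any two primary decompositions $N=Q_1\cap\cdots\cap Q_s=Q_1'\cap\cdots\cap Q_s'$ with $Q_i,Q_i'\in\Lambda_{P_i}(N\subsetneq M)$ for all $i$, one has $Q_1\cap\cdots\cap Q_r=Q_1'\cap\cdots\cap Q_r'$. *)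

(* Defs.v *)
From HB Require Import structures.
From mathcomp Require Import all_boot all_order all_algebra.
From mathcomp Require Import boolp classical_sets.
Set Implicit Arguments. Unset Strict Implicit. Unset Printing Implicit Defensive.
Import GRing.Theory.
Local Open Scope ring_scope.
Local Open Scope classical_set_scope.

Section Defs.
Variable R : comRingType.

Definition is_ideal (I : set R) : Prop :=
  I 0 /\ (forall a b, I a -> I b -> I (a + b)) /\ (forall a b, I b -> I (a * b)).

Definition is_prime_ideal (P : set R) : Prop :=
  is_ideal P /\ ~ P 1 /\ (forall a b, P (a * b) -> P a \/ P b).

Definition noetherian_ring : Prop :=
  forall I : nat -> set R, (forall n, is_ideal (I n)) ->
    (forall n, I n `<=` I n.+1) ->
    exists n0, forall m, (n0 <= m)%N -> I m = I n0.

Variable M : lmodType R.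

Definition is_submodule (N : set M) : Prop :=
  N 0 /\ (forall x y, N x -> N y -> N (x + y)) /\ (forall a x, N x -> N (a *: x)).

Definition fg_module : Prop :=
  exists (n : nat) (g : 'I_n -> M),
    forall m : M, exists a : 'I_n -> R, m = \sum_(i < n) a i *: g i.

Definition fg_submodule (N : set M) : Prop :=
  is_submodule N /\
  exists (n : nat) (g : 'I_n -> M), (forall i, N (g i)) /\
    forall m : M, N m -> exists a : 'I_n -> R, m = \sum_(i < n) a i *: g i.

(** (N :_R m) = annihilator of the class of m in M/N. *)
Definition colon (N : set M) (m : M) : set R := [set a | N (a *: m)].

(** Ass(M/N): primes of the form Ann_R(m + N). *)
Definition Ass (N : set M) : set (set R) :=
  [set P | is_prime_ideal P /\ exists m : M, P = colon N m].

Definition is_primary (P : set R) (Q : set M) : Prop :=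
  is_submodule Q /\ Ass Q = [set P].

Definition primary_decomposition (N : set M) (k : nat)
    (Q : 'I_k -> set M) (Pd : 'I_k -> set R) : Prop :=
  (forall i, is_primary (Pd i) (Q i)) /\
  injective Pd /\
  N = \bigcap_(i in [set: 'I_k]) Q i /\
  (forall j : 'I_k, \bigcap_(i in [set i | i != j]) Q i <> N).

Definition Lambda (P : set R) (N : set M) : set (set M) :=
  [set Q0 | exists (k : nat) (Q : 'I_k -> set M) (Pd : 'I_k -> set R) (j : 'I_k),
     primary_decomposition N Q Pd /\ Pd j = P /\ Q j = Q0].

Definition cap_first (s r : nat) (Q : 'I_s -> set M) : set M :=
  \bigcap_(i in [set i : 'I_s | (i < r)%N]) Q i.

(** Independence over X = {P_0, ..., P_(r-1)}, where Ass(M/N) = {P_0,...,P_(s-1)}. *)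
Definition independent_over (N : set M) (s r : nat) (P : 'I_s -> set R) : Prop :=
  forall Q Q' : 'I_s -> set M,
    (forall i, Lambda (P i) N (Q i)) -> (forall i, Lambda (P i) N (Q' i)) ->
    N = \bigcap_(i in [set: 'I_s]) Q i ->
    N = \bigcap_(i in [set: 'I_s]) Q' i ->
    cap_first r Q = cap_first r Q'.

End Defs.

(* Main.v *)
Require Import Defs.
From HB Require Import structures.
From mathcomp Require Import all_boot all_order all_algebra.
From mathcomp Require Import boolp classical_sets.
Import GRing.Theory.
Local Open Scope ring_scope.
Local Open Scope classical_set_scope.

Section Aux.
Variables (R : comRingType) (M : lmodType R).
Implicit Types (N : set M).

Lemma colon_ideal N y : is_submodule N -> is_ideal (colon N y).
Proof.
move=> [N0 [ND NZ]]; split; [|split].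
- by rewrite /colon /= scale0r.
- move=> a b Ha Hb; rewrite /colon /= scalerDl; exact: ND.
- move=> a b Hb; rewrite /colon /= -scalerA; exact: NZ.
Qed.

Lemma max_colon N x : noetherian_ring R -> is_submodule N -> ~ N x ->
  exists a, ~ N (a *: x) /\ (forall b, ~ N (b *: x) ->
    colon N (a *: x) `<=` colon N (b *: x) -> colon N (b *: x) `<=` colon N (a *: x)).
Proof.
move=> noeth HN Nx; apply: contrapT => H.
have step : forall a, exists b, ~ N (a *: x) -> [/\ ~ N (b *: x),
    colon N (a*:x) `<=` colon N (b*:x) & ~ (colon N (b*:x) `<=` colon N (a*:x))].
  move=> a; case: (pselect (N (a*:x))) => Na; first by exists a.
  apply: contrapT => Hn; apply: H; exists a; split => // b Nb sub.
  apply: contrapT => nsub; apply: Hn; exists b => _; by split.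
have [g Hg] := choice step.
pose a n := iter n g 1.
have Ha : forall n, ~ N (a n *: x).
  elim => [|n IH] /=; first by rewrite scale1r.
  by case: (Hg _ IH).
have [n0 Hn0] := noeth (fun n => colon N (a n *: x)) (fun n => colon_ideal _ _ HN)
  (fun n => let: And3 _ h _ := Hg _ (Ha n) in h).
have E := Hn0 n0.+1 (leqnSn n0).
case: (Hg _ (Ha n0)) => _ _; apply.
change (colon N (a n0.+1 *: x) `<=` colon N (a n0 *: x)); rewrite E.
by [].
Qed.

Lemma ass_exists N x : noetherian_ring R -> is_submodule N -> ~ N x ->
  exists a, is_prime_ideal (colon N (a *: x)).
Proof.
move=> noeth HN Nx; have [a [Na Hmax]] := max_colon N x noeth HN Nx.
have HN' := HN; case: HN' => [N0 [ND NZ]].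
exists a; split; first exact: colon_ideal.
split; first by rewrite /colon /= scale1r.
move=> b c; rewrite /colon /= => Hbc.
case: (pselect (N (b *: (a *: x)))) => Hb; [by left|right].
have Hb' : ~ N ((b * a) *: x) by rewrite -scalerA.
have sub : colon N (a *: x) `<=` colon N ((b * a) *: x).
  move=> d; rewrite /colon /= => Hd.
  have E : d *: ((b*a)*:x) = b *: (d *: (a*:x)) by rewrite !scalerA mulrA (mulrC d b).
  rewrite E; exact: NZ _ _ Hd.
apply: (Hmax _ Hb' sub c); rewrite /colon /=.
have -> : c *: ((b*a)*:x) = (b*c) *: (a*:x) by rewrite !scalerA mulrA (mulrC c b).
exact: Hbc.
Qed.


Lemma prod_notin (P0 : set R) (I : finType) (f : I -> R) :
  is_prime_ideal P0 -> (forall i, ~ P0 (f i)) -> ~ P0 (\prod_i f i).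
Proof.
move=> [_ [P1 Pp]] Hf; elim/big_rec: _ => [|i z _ Hz] //.
by move=> /Pp [] //; apply: Hf.
Qed.

Lemma ass_in_dec N k (D : 'I_k -> set M) (Pd : 'I_k -> set R) (P0 : set R) y :
  primary_decomposition N D Pd -> is_prime_ideal P0 -> P0 = colon N y ->
  exists l, ~ D l y /\ P0 = Pd l.
Proof.
move=> [Hprim [inj [HN irr]]] Hp Py.
have Dsub l : is_submodule (D l) := (Hprim l).1.
apply: contrapT => H.
have hc : forall l, exists c, ~ P0 c /\ D l (c *: y).
  move=> l; case: (pselect (D l y)) => Dy.
    exists 1; split; first by case: Hp => _ [].
    by rewrite scale1r.
  apply: contrapT => H2; apply: H; exists l; split => //.
  have E : colon (D l) y = P0.
    apply/seteqP; split => c.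
      rewrite /colon /= => Dc; apply: contrapT => Pc; apply: H2; exists c; by split.
    rewrite Py /colon /= HN; exact.
  have : Ass (D l) P0 by split => //; exists y.
  by rewrite (Hprim l).2 => ->.
have [cf Hcf] := choice hc.
have notPc : ~ P0 (\prod_l cf l) by apply: prod_notin => // l; case: (Hcf l).
apply: notPc; rewrite Py /colon /= HN => l _.
rewrite (bigD1 l) //= mulrC -scalerA.
by case: (Dsub l) => _ [_ NZ]; apply: NZ; case: (Hcf l).
Qed.

Arguments ass_in_dec {N k D Pd P0 y}.

Lemma cap_all N s (P : 'I_s -> set R) (Qf : 'I_s -> set M) :
  noetherian_ring R -> is_submodule N ->
  (forall Pr, Ass N Pr -> exists i, P i = Pr) ->
  (forall i, Lambda (P i) N (Qf i)) ->
  N = \bigcap_(i in [set: 'I_s]) Qf i.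
Proof.
move=> noeth HN HA HL; apply/seteqP; split.
  move=> x Nx i _.
  have [k [D [Pd [j [[Hprim [inj [HN' irr]]] [Pj Dj]]]]]] := HL i.
  by rewrite -Dj; move: Nx; rewrite HN' => /(_ j Logic.I).
move=> x Hx; apply: contrapT => Nx.
have [a Hp] := ass_exists N x noeth HN Nx.
have [i Pi] : exists i, P i = colon N (a *: x) by apply: HA; split => //; exists (a *: x).
have [k [D [Pd [j [Hdec [Pj Dj]]]]]] := HL i.
have Hdec' := Hdec; case: Hdec' => [Hprim [inj _]].
have yD : D j (a *: x).
  case: (Hprim j).1 => _ [_ NZ]; apply: NZ; rewrite Dj; exact: Hx.
have Hp' : is_prime_ideal (P i) by rewrite Pi.
have [l [nDl Pl]] := ass_in_dec Hdec Hp' Pi.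
have lj : l = j by apply: inj; rewrite -Pl Pj.
by apply: nDl; rewrite lj.
Qed.

End Aux.
Arguments ass_in_dec {R M N k D Pd P0 y}.
Arguments cap_all {R M N s P Qf}.

Theorem lemma2p1 (R : comRingType) (M : lmodType R) (N : set M)
    (s r : nat) (P : 'I_s -> set R) :
  noetherian_ring R ->
  fg_module M ->
  fg_submodule N ->
  N <> setT ->
  injective P ->
  (forall Pr : set R, Ass N Pr <-> exists i, P i = Pr) ->
  (r <= s)%N ->
  (independent_over N r P <->
   (forall Q Q' : 'I_s -> set M,
      (forall i : 'I_s, (i < r)%N -> Lambda (P i) N (Q i)) ->
      (forall i : 'I_s, (i < r)%N -> Lambda (P i) N (Q' i)) ->
      cap_first r Q = cap_first r Q')).
Proof.
move=> noeth _ fgN NT injP HA rs.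
have HN := fgN.1.
have HA' : forall Pr, Ass N Pr -> exists i, P i = Pr by move=> Pr /HA.
have capE : forall F G : 'I_s -> set M, (forall i : 'I_s, (i < r)%N -> F i = G i) ->
    cap_first r F = cap_first r G.
  move=> F G FG; apply/seteqP; split => x H i hi.
    by rewrite -FG //; apply: H.
  by rewrite FG //; apply: H.
split; last first.
  by move=> H2 Q Q' HQ HQ' _ _; apply: H2 => i _; [exact: HQ | exact: HQ'].
move=> Hind Q Q' HQ HQ'.
case: (posnP r) => [r0|rpos].
  by apply: capE => i; rewrite r0 ltn0.
pose i0 : 'I_s := Ordinal (leq_trans rpos rs).
have [k [D [Pd [j [Hdec _]]]]] := HQ i0 rpos.
have Lall : forall i, exists Z, Lambda (P i) N Z.
  move=> i; have : Ass N (P i) by apply/HA; exists i.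
  case=> Hp [m Pm].
  have [l [_ Pl]] := ass_in_dec Hdec Hp Pm.
  by exists (D l); exists k, D, Pd, l.
have [W HW] := choice Lall.
pose Qf (i : 'I_s) := if (i < r)%N then Q i else W i.
pose Q'f (i : 'I_s) := if (i < r)%N then Q' i else W i.
have LQf : forall i, Lambda (P i) N (Qf i).
  by move=> i; rewrite /Qf; case: ifP => h; [exact: HQ | exact: HW].
have LQ'f : forall i, Lambda (P i) N (Q'f i).
  by move=> i; rewrite /Q'f; case: ifP => h; [exact: HQ' | exact: HW].
have := Hind Qf Q'f LQf LQ'f (cap_all noeth HN HA' LQf) (cap_all noeth HN HA' LQ'f).
have -> : cap_first r Qf = cap_first r Q by apply: capE => i hi; rewrite /Qf hi.
have -> : cap_first r Q'f = cap_first r Q' by apply: capE => i hi; rewrite /Q'f hi.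
by [].
Qed.
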